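(* Let $\langle\{a,b\},C,d,O,v,\{<,<^{-1}\}\rangle$ be a two-player infinite sequential game where $O$ is finite, $<$ is a strict linear order on $O$, player $a$ has preference $<$ and player $b$ has preference $<^{-1}$. Let $\Gamma\subseteq\mathcal{P}(C^\omega)$ and assume: (1) for all $O'\subseteq O$ and $\gamma\in C^*$, $\{\alpha\in C^\omega\mid v(\gamma\alpha)\in O'\}\in\Gamma$; (2) the win-lose game $\langle C,D,W\rangle$ is determined for all $W\in\Gamma$ and $D\subseteq C^*$. Then the game has a subgame perfect equilibrium.
   Context: $C$ is a non-empty set of choices, $d:C^*\to\{a,b\}$ assigns the chooser after each history, $v:C^\omega\to O$. A strategy of $X$ is a function $s:d^{-1}(\{X\})\to C$; a profile is identified with $\sigma:C^*\to C$. For $\gamma\in C^*$, the play $p^\gamma(\sigma)$ is given by $p_n=\gamma_n$ for $n<|\gamma|$ and $p_n=\sigma(p_{<n})$ otherwise. $\sigma$ is a subgame perfect equilibrium if there are no $\gamma\in C^*$, player $X$ and strategy $s$ of $X$ with $v(p^\gamma(\sigma))\prec_X v(p^\gamma(\sigma_{X\mapsto s}))$, where $\prec_a={<}$, $\prec_b={<^{-1}}$ and $\sigma_{X\mapsto s}$ agrees with $s$ on $d^{-1}(\{X\})$ and with $\sigma$ elsewhere. The win-lose game $\langle C,D,W\rangle$ is the two-player game where the first player chooses after histories in $D$, the second after histories in $C^*\setminus D$, and the first player wins iff the play lies in $W$; it is determined if one player has a winning strategy. *)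

(* Defs.v *)
From mathcomp Require Import all_boot all_order.
Set Implicit Arguments. Unset Strict Implicit. Unset Printing Implicit Defensive.
Import Order.TTheory.

Inductive player := pa | pb.

Definition player_eq_dec (x y : player) : {x = y} + {x <> y}.
Proof. decide equality. Defined.

Section Games.
Variable C : Type.

Definition prepend (g : seq C) (al : nat -> C) : nat -> C :=
  fun n => if n < size g then nth (al 0) g n else al (n - size g).

(* the history of length |gamma| + k along the play p^gamma(sigma) *)
Fixpoint ext (g : seq C) (sigma : seq C -> C) (k : nat) : seq C :=
  match k with
  | 0 => g
  | k'.+1 => rcons (ext g sigma k') (sigma (ext g sigma k'))
  end.

Definition play (g : seq C) (sigma : seq C -> C) : nat -> C :=
  fun n => if n < size g then nth (sigma [::]) g n
           else sigma (ext g sigma (n - size g)).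

Variable d : seq C -> player.

Definition strategy (X : player) := {h : seq C | d h = X} -> C.

Definition deviate (sigma : seq C -> C) (X : player) (s : strategy X) : seq C -> C :=
  fun h => match player_eq_dec (d h) X with
           | left e => s (exist _ h e)
           | right _ => sigma h
           end.

Arguments deviate sigma X s h : clear implicits.

Variables (disp : Order.disp_t) (O : orderType disp).
Variable v : (nat -> C) -> O.

Definition prefers (X : player) (o1 o2 : O) : bool :=
  match X with pa => (o1 < o2)%O | pb => (o2 < o1)%O end.

Definition SPE (sigma : seq C -> C) : Prop :=
  ~ exists (g : seq C) (X : player) (s : strategy X),
      prefers X (v (play g sigma)) (v (play g (deviate sigma X s))).

End Games.

Section WinLose.
Variable C : Type.

Definition pre (p : nat -> C) (n : nat) : seq C := mkseq p n.

Definition wl_outcome (D : seq C -> Prop) (s1 : {h : seq C | D h} -> C)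
  (s2 : {h : seq C | ~ D h} -> C) (p : nat -> C) : Prop :=
  forall n, (forall H : D (pre p n), p n = s1 (exist _ (pre p n) H)) /\
            (forall H : ~ D (pre p n), p n = s2 (exist _ (pre p n) H)).

Definition first_wins (D : seq C -> Prop) (W : (nat -> C) -> Prop) : Prop :=
  exists s1 : {h : seq C | D h} -> C,
    forall (s2 : {h : seq C | ~ D h} -> C) p, wl_outcome s1 s2 p -> W p.

Definition second_wins (D : seq C -> Prop) (W : (nat -> C) -> Prop) : Prop :=
  exists s2 : {h : seq C | ~ D h} -> C,
    forall (s1 : {h : seq C | D h} -> C) p, wl_outcome s1 s2 p -> ~ W p.

Definition determined (D : seq C -> Prop) (W : (nat -> C) -> Prop) : Prop :=
  first_wins D W \/ second_wins D W.

End WinLose.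

(* Main.v *)
Require Import Defs.
From mathcomp Require Import all_boot all_order.
From Stdlib Require Import ClassicalEpsilon ProofIrrelevance FunctionalExtensionality Classical.
Set Implicit Arguments. Unset Strict Implicit. Unset Printing Implicit Defensive.
Import Order.TTheory.

Lemma pre_take (C : Type) (q : nat -> C) i n : i <= n -> take i (pre q n) = pre q i.
Proof. by move=> H; rewrite /pre /mkseq -map_take take_iota (minn_idPl H). Qed.

Lemma nth_pre (C : Type) x0 (q : nat -> C) n j : j < n -> nth x0 (pre q n) j = q j.
Proof. by move=> H; rewrite /pre nth_mkseq. Qed.

Lemma size_pre (C : Type) (q : nat -> C) n : size (pre q n) = n.
Proof. exact: size_mkseq. Qed.

Lemma preS (C : Type) (q : nat -> C) n : pre q n.+1 = rcons (pre q n) (q n).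
Proof. exact: mkseqS. Qed.

Lemma pre_play (C : Type) (g : seq C) sigma k :
  pre (play g sigma) (size g + k) = ext g sigma k.
Proof.
elim: k => [|k IH].
  rewrite addn0 /= -[RHS](mkseq_nth (sigma [::]) g) /pre /mkseq.
  apply/eq_in_map => i; rewrite mem_iota add0n => /andP[_ Hi].
  by rewrite /play Hi.
rewrite addnS preS IH /= /play ltnNge leq_addr /= addKn.
by rewrite -IH.
Qed.

Lemma play_pre (C : Type) (g : seq C) sigma : pre (play g sigma) (size g) = g.
Proof. by rewrite -[X in pre _ X]addn0 pre_play. Qed.

Lemma play_step (C : Type) (g : seq C) sigma n :
  size g <= n -> play g sigma n = sigma (pre (play g sigma) n).
Proof.
move=> H; rewrite -(subnKC H) pre_play {1}/play ltnNge leq_addr /= addKn //.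
Qed.

Definition Gu (C : Type) (d : seq C -> player) (O2 : Type) (v2 : (nat -> C) -> O2)
  (X : player) (g : seq C) (t : seq C -> C) (P : O2 -> Prop) : Prop :=
  forall q : nat -> C, pre q (size g) = g ->
    (forall n, size g <= n -> d (pre q n) = X -> q n = t (pre q n)) -> P (v2 q).

Lemma Gu_impl (C : Type) d (O2 : Type) (v2 : (nat -> C) -> O2) X g t (P Q : O2 -> Prop) :
  (forall x, P x -> Q x) -> Gu d v2 X g t P -> Gu d v2 X g t Q.
Proof. by move=> HPQ HG q Hq Hc; apply: HPQ; apply: HG. Qed.

Lemma Gu_ext (C : Type) (c0 : C) d (O2 : Type) (v2 : (nat -> C) -> O2) X A h t P :
  Gu d v2 X A t P -> size A <= size h -> take (size A) h = A ->
  (forall j, size A <= j < size h -> d (take j h) = X -> nth c0 h j = t (take j h)) ->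
  Gu d v2 X h t P.
Proof.
move=> HA Hs Ht Hc q Hq Hq'; apply: HA.
  by rewrite -(pre_take _ Hs) Hq.
move=> n Hn Hd; case: (ltnP n (size h)) => Hnh.
  have E : pre q n = take n h by rewrite -Hq pre_take // ltnW.
  rewrite E -(nth_pre c0 q Hnh) Hq; rewrite E in Hd.
  by apply: Hc => //; rewrite Hn.
exact: Hq'.
Qed.

Definition cb (P : Prop) : bool := if excluded_middle_informative P then true else false.
Lemma cbP (P : Prop) : reflect P (cb P).
Proof. by rewrite /cb; case: excluded_middle_informative => H; constructor. Qed.

Lemma take_rcons_le (T : Type) (h : seq T) x j : j <= size h -> take j (rcons h x) = take j h.
Proof.
move=> H; rewrite -cats1 take_cat; case: ltnP => // H2.
have -> : j = size h by apply/eqP; rewrite eqn_leq H H2.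
by rewrite subnn take0 cats0 take_size.
Qed.

Lemma evconst (T : Type) (R : T -> T -> Prop) (mu : T -> nat)
  (Rtr : forall x y z, R x y -> R y z -> R x z) (Rrefl : forall x, R x x)
  (Hmu : forall x y, R x y -> x <> y -> mu y < mu x) (f : nat -> T) N0 :
  (forall n, N0 <= n -> R (f n) (f n.+1)) ->
  exists N, N0 <= N /\ forall m, N <= m -> f m = f N.
Proof.
move=> Hf.
have chain : forall N k, N0 <= N -> R (f N) (f (N + k)).
  move=> N; elim=> [|k IH] HN; first by rewrite addn0.
  apply: Rtr (IH HN) _; rewrite addnS; apply: Hf; exact: leq_trans HN (leq_addr _ _).
suff: forall k N, N0 <= N -> mu (f N) <= k -> exists N', N0 <= N' /\ forall m, N' <= m -> f m = f N'.
  by move=> H; apply: (H _ N0).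
elim=> [|k IH] N HN Hk.
  case: (classic (forall m, N <= m -> f m = f N)) => Hc; first by exists N.
  move: Hc => /not_all_ex_not [m Hm0]; move: (imply_to_and _ _ Hm0) => [Hm Hne].
  have := Hmu _ _ (chain N (m - N) HN); rewrite subnKC // => /(_ (nesym Hne)) Hlt.
  by move: (leq_trans Hlt Hk).
case: (classic (forall m, N <= m -> f m = f N)) => Hc; first by exists N.
move: Hc => /not_all_ex_not [m Hm0]; move: (imply_to_and _ _ Hm0) => [Hm Hne].
have := Hmu _ _ (chain N (m - N) HN); rewrite subnKC // => /(_ (nesym Hne)) Hlt.
apply: (IH m) => //; first exact: leq_trans HN Hm.
by rewrite -ltnS; exact: leq_trans Hlt Hk.
Qed.

Lemma evconst_ord (disp2 : Order.disp_t) (O2 : finOrderType disp2) (f : nat -> O2) N0 :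
  (forall n, N0 <= n -> (f n <= f n.+1)%O) ->
  exists N, N0 <= N /\ forall m, N <= m -> f m = f N.
Proof.
apply: (@evconst O2 (fun x y => (x <= y)%O) (fun x => #|[set z | (x < z)%O]|)).
- by move=> x y z; apply: le_trans.
- by move=> x.
move=> x y Hxy Hne; apply: proper_card; apply/properP; split.
  apply/subsetP => z; rewrite !inE => Hz; exact: le_lt_trans Hxy Hz.
exists y; rewrite !inE ?ltxx //; rewrite lt_neqAle Hxy andbT; apply/eqP; exact: Hne.
Qed.

Lemma evconst_nat (f : nat -> nat) N0 :
  (forall n, N0 <= n -> f n.+1 <= f n) ->
  exists N, N0 <= N /\ forall m, N <= m -> f m = f N.
Proof.
apply: (@evconst nat (fun x y => y <= x) id).
- by move=> x y z H1 H2; exact: leq_trans H2 H1.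
- by move=> x.
move=> x y H Hne /=; rewrite ltn_neqAle H andbT; apply/eqP => E; apply: Hne; by [].
Qed.

Section Opt.
Variables (C : Type) (c0 : C) (d : seq C -> player) (disp2 : Order.disp_t)
  (O2 : finOrderType disp2) (v2 : (nat -> C) -> O2) (X : player)
  (val : seq C -> O2) (tw : seq C -> seq C -> C).
Hypothesis Hw : forall h, Gu d v2 X h (tw h) (fun x => (val h <= x)%O).
Hypothesis Hmax : forall h t o, Gu d v2 X h t (fun x => (o <= x)%O) -> (o <= val h)%O.

Definition good (h : seq C) (i : nat) : Prop :=
  i <= size h /\ (forall j, i <= j <= size h -> val (take j h) = val h) /\
  (forall j, i <= j < size h -> d (take j h) = X -> nth c0 h j = tw (take i h) (take j h)).

Lemma good_size h : good h (size h).
Proof.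
split=> //; split.
  move=> j /andP[H1 H2]; have -> : j = size h by apply/eqP; rewrite eqn_leq H1 H2.
  by rewrite take_size.
by move=> j /andP[H1 H2]; move: (leq_ltn_trans H1 H2); rewrite ltnn.
Qed.

Definition anc (h : seq C) : nat :=
  ex_minn (ex_intro (fun i => cb (good h i)) (size h) (introT (cbP _) (good_size h))).

Lemma anc_good h : good h (anc h).
Proof. by rewrite /anc; case: ex_minnP => m /cbP. Qed.

Lemma anc_min h i : good h i -> anc h <= i.
Proof. by rewrite /anc; case: ex_minnP => m _ Hm /cbP; apply: Hm. Qed.

Definition strat (h : seq C) : C := tw (take (anc h) h) h.

Lemma step_other h c : d h <> X -> (val h <= val (rcons h c))%O.
Proof.
move=> Hd; apply: (Hmax (t := tw h)); refine (Gu_ext (c0:=c0) (@Hw h) _ _ _).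
- by rewrite size_rcons.
- by rewrite take_rcons_le // take_size.
move=> j; rewrite size_rcons ltnS => /andP[H1 H2].
have -> : j = size h by apply/eqP; rewrite eqn_leq H1 H2.
by rewrite take_rcons_le // take_size.
Qed.

Lemma step_own h : d h = X -> (val h <= val (rcons h (strat h)))%O.
Proof.
move=> Hd; have [Hi [Hval Hcons]] := anc_good h.
rewrite -(Hval (anc h)); last by rewrite leqnn Hi.
apply: Hmax; refine (Gu_ext (c0:=c0) (@Hw (take (anc h) h)) _ _ _).
- by rewrite size_takel // size_rcons (leq_trans Hi (leqnSn _)).
- by rewrite size_takel // take_rcons_le.
move=> j; rewrite size_takel // size_rcons ltnS => /andP[H1 H2].
rewrite take_rcons_le // nth_rcons.
case: (ltnP j (size h)) => H3.
  by move=> Hdj; apply: Hcons => //; rewrite H1.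
have E : j = size h by apply/eqP; rewrite eqn_leq H2 H3.
by rewrite E eqxx take_size.
Qed.

Lemma opt g q : pre q (size g) = g ->
  (forall n, size g <= n -> d (pre q n) = X -> q n = strat (pre q n)) ->
  (val g <= v2 q)%O.
Proof.
move=> Hq Hc.
have mono : forall n, size g <= n -> (val (pre q n) <= val (pre q n.+1))%O.
  move=> n Hn; rewrite preS; case: (player_eq_dec (d (pre q n)) X) => Hd.
    by rewrite (Hc n Hn Hd); apply: step_own.
  exact: step_other.
have monok : forall k, (val g <= val (pre q (size g + k)))%O.
  elim=> [|k IH]; first by rewrite addn0 Hq.
  by apply: le_trans IH _; rewrite addnS; apply: mono; apply: leq_addr.
have [N1 [HN1 HcN1]] := evconst_ord mono.
pose a n := anc (pre q n).
have goodq : forall m i, good (pre q m) i <->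
   (i <= m /\ (forall j, i <= j <= m -> val (pre q j) = val (pre q m)) /\
   (forall j, i <= j < m -> d (pre q j) = X -> q j = tw (pre q i) (pre q j))).
  move=> m i; rewrite /good size_pre; split.
    move=> [Hi [Hv Hcs]]; split=> //; split.
      by move=> j Hj; rewrite -(Hv j Hj) pre_take //; case/andP: Hj.
    move=> j /andP[H1 H2]; rewrite -(nth_pre c0 q H2) -(pre_take q (ltnW H2)) -(pre_take q Hi).
    by move=> Hd; apply: Hcs => //; rewrite H1.
  move=> [Hi [Hv Hcs]]; split=> //; split.
    by move=> j Hj; rewrite pre_take ?Hv //; case/andP: Hj.
  move=> j /andP[H1 H2]; rewrite (nth_pre c0 q H2) (pre_take q (ltnW H2)) (pre_take q Hi).
  by move=> Hd; apply: Hcs => //; rewrite H1.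
have amono : forall n, N1 <= n -> a n.+1 <= a n.
  move=> n Hn; apply: anc_min; apply/goodq.
  have /goodq [Hi [Hv Hcs]] := anc_good (pre q n); rewrite -/(a n) in Hi Hv Hcs *.
  split; first exact: leqW.
  split.
    move=> j /andP[H1 H2]; rewrite leq_eqVlt in H2; case/orP: H2 => [/eqP -> //|H2].
    rewrite Hv ?H1 // HcN1 ?(leq_trans Hn) // HcN1 //; exact: leq_trans Hn (leqnSn _).
  move=> j /andP[H1 H2] Hd; rewrite ltnS leq_eqVlt in H2; case/orP: H2 => [/eqP E|H2].
    rewrite E; rewrite E in Hd.
    rewrite (Hc n) //; last exact: leq_trans HN1 Hn.
    by rewrite /strat -/(a n) pre_take.
  by apply: Hcs => //; rewrite H1.
have [M [HM HcM]] := evconst_nat amono.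
have goodM : forall m, M <= m -> good (pre q m) (a M).
  by move=> m Hm; have := anc_good (pre q m); have E := HcM m Hm; rewrite /a in E; rewrite E.
have /goodq [HiM [HvM _]] := goodM M (leqnn M).
have Hfin : (val (pre q (a M)) <= v2 q)%O.
  apply: (@Hw (pre q (a M))); first by rewrite size_pre.
  rewrite size_pre => n Hn Hd.
  have /goodq [_ [_ Hcs]] := goodM (maxn M n.+1) (leq_maxl _ _).
  by apply: Hcs => //; rewrite Hn leq_max ltnSn orbT.
apply: le_trans Hfin; rewrite HvM; last by rewrite leqnn HiM.
rewrite (HcN1 M HM) -(subnKC HN1).
exact: monok.
Qed.

End Opt.

Lemma pre_shift (C : Type) (q : nat -> C) (g : seq C) n :
  pre q (size g) = g -> pre q (size g + n) = g ++ pre (fun k => q (size g + k)) n.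
Proof.
move=> Hq; elim: n => [|n IH]; first by rewrite addn0 cats0.
by rewrite addnS preS IH preS rcons_cat.
Qed.

Lemma prepend_shift (C : Type) (q : nat -> C) (g : seq C) :
  pre q (size g) = g -> prepend g (fun k => q (size g + k)) = q.
Proof.
move=> Hq; apply: functional_extensionality => n; rewrite /prepend.
case: ltnP => H; first by rewrite -[X in nth _ X _]Hq nth_pre.
by rewrite subnKC.
Qed.

Lemma first_to_Gu (C : Type) (c0 : C) d (O : Type) (v : (nat -> C) -> O) g (Q : O -> Prop) :
  first_wins (fun h => d (g ++ h) = pa) (fun al => Q (v (prepend g al))) ->
  exists t, Gu d v pa g t Q.
Proof.
move=> [s1 Hs1].
exists (fun h => match excluded_middle_informative (d (g ++ drop (size g) h) = pa) with
   | left H => s1 (exist _ (drop (size g) h) H) | right _ => c0 end).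
move=> q Hq Hc; set al := fun k => q (size g + k).
rewrite -(prepend_shift Hq); apply: (Hs1 (fun h => al (size (proj1_sig h)))).
move=> n; split => H.
  rewrite /al (Hc (size g + n)) ?leq_addr ?pre_shift //.
  rewrite drop_size_cat //; case: excluded_middle_informative => H' //.
  by rewrite (proof_irrelevance _ H' H).
by rewrite /= size_pre.
Qed.

Lemma second_to_Gu (C : Type) (c0 : C) d (O : Type) (v : (nat -> C) -> O) g (Q : O -> Prop) :
  second_wins (fun h => d (g ++ h) = pa) (fun al => Q (v (prepend g al))) ->
  exists t, Gu d v pb g t (fun x => ~ Q x).
Proof.
move=> [s2 Hs2].
exists (fun h => match excluded_middle_informative (~ d (g ++ drop (size g) h) = pa) with
   | left H => s2 (exist _ (drop (size g) h) H) | right _ => c0 end).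
move=> q Hq Hc; set al := fun k => q (size g + k).
rewrite -(prepend_shift Hq); apply: (Hs2 (fun h => al (size (proj1_sig h)))).
move=> n; split => H.
  by rewrite /= size_pre.
have Hd : d (pre q (size g + n)) = pb.
  by rewrite pre_shift //; case: (d _) H.
rewrite /al (Hc (size g + n) (leq_addr _ _) Hd) pre_shift //.
rewrite drop_size_cat //; case: excluded_middle_informative => H' //.
by rewrite (proof_irrelevance _ H' H).
Qed.

Lemma mix (C : Type) d (O : Type) (v : (nat -> C) -> O) g ta tb (P Q : O -> Prop) :
  Gu d v pa g ta P -> Gu d v pb g tb Q -> exists q, P (v q) /\ Q (v q).
Proof.
move=> Ha Hb; pose sig := fun h => match d h with pa => ta h | pb => tb h end.
exists (play g sig); split; [apply: Ha | apply: Hb]; rewrite ?play_pre //;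
  move=> n Hn Hd; rewrite play_step // /sig Hd //.
Qed.

Theorem theorem24 (C : Type) (HC : inhabited C) (d : seq C -> player)
  (disp : Order.disp_t) (O : finOrderType disp) (v : (nat -> C) -> O)
  (Gamma : ((nat -> C) -> Prop) -> Prop)
  (H1 : forall (O' : {set O}) (g : seq C),
          Gamma (fun al => v (prepend g al) \in O'))
  (H2 : forall W : (nat -> C) -> Prop, Gamma W ->
          forall D : seq C -> Prop, determined D W) :
  exists sigma : seq C -> C, SPE d v sigma.
Proof.
case: HC => c0.
have det : forall g (O' : {set O}), (exists t, Gu d v pa g t (fun x => x \in O')) \/
    (exists t, Gu d v pb g t (fun x => ~ (x \in O'))).
  move=> g O'; case: (@H2 _ (H1 O' g) (fun h => d (g ++ h) = pa)) => H.
    by left; exact: (first_to_Gu (Q := fun x => x \in O') c0 H).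
  by right; exact: (second_to_Gu (Q := fun x => x \in O') c0 H).
pose Pa g (o : O) := exists t, Gu d v pa g t (fun x => (o <= x)%O).
have [o0 Ho0] : exists o0 : O, forall x, (o0 <= x)%O.
  case: (@arg_minP _ O O (v (fun _ => c0)) predT (fun x => x) isT) => o0 _ H.
  by exists o0 => x; apply: H.
have Pa0 : forall g, Pa g o0 by move=> g; exists (fun _ => c0) => q _ _; apply: Ho0.
pose val g := [arg max_(o > o0 | cb (Pa g o)) o]%O.
have V12 : forall g, Pa g (val g) /\ (forall o, Pa g o -> (o <= val g)%O).
  move=> g; rewrite /val.
  case: (@arg_maxP _ O O o0 (fun o => cb (Pa g o)) (fun o => o) (introT (cbP _) (Pa0 g))).
  by move=> o /cbP Ho Hm; split => // o' /(introT (cbP _)) /Hm.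
pose ta g := proj1_sig (constructive_indefinite_description _ (proj1 (V12 g))).
have Hwa : forall h, Gu d v pa h (ta h) (fun x => (val h <= x)%O).
  by move=> h; rewrite /ta; case: constructive_indefinite_description.
have Hmaxa : forall h t (o : O), Gu d v pa h t (fun x => (o <= x)%O) -> (o <= val h)%O.
  by move=> h t o Ht; apply: (proj2 (V12 h)); exists t.
have V3 : forall g, exists t, Gu d v pb g t (fun x => (x <= val g)%O).
  move=> g; case: (det g [set x | (val g < x)%O]) => [[t Ht]|[t Ht]]; last first.
    by exists t; apply: Gu_impl Ht => x; rewrite inE => /negP; rewrite -leNgt.
  exfalso.
  have Hq : (val g < v (play g t))%O.
    have := Ht (play g t) (play_pre g t) (fun n Hn _ => play_step t Hn).
    by rewrite inE.
  case: (@arg_minP _ O O (v (play g t)) (fun x => (val g < x)%O) (fun x => x) Hq).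
  move=> o' Ho' Hmin.
  have : (o' <= val g)%O.
    apply: (Hmaxa g t); apply: Gu_impl Ht => x; rewrite inE => Hx; exact: Hmin.
  by move=> H; move: (lt_le_trans Ho' H); rewrite ltxx.
have V4 : forall g t (o : O), Gu d v pb g t (fun x => (x <= o)%O) -> (val g <= o)%O.
  move=> g t o Ht; have [q [Hq1 Hq2]] := mix (Hwa g) Ht; exact: le_trans Hq1 Hq2.
pose tb g := proj1_sig (constructive_indefinite_description _ (V3 g)).
have Hwb : forall h, Gu d (v : (nat -> C) -> O^d) pb h (tb h) (fun x : O^d => ((val h : O^d) <= x)%O).
  move=> h; rewrite /tb; case: constructive_indefinite_description => t Ht /=.
  by apply: Gu_impl Ht => x; rewrite leEdual.
have Hmaxb : forall h t (o : O^d), Gu d (v : (nat -> C) -> O^d) pb h t (fun x : O^d => (o <= x)%O) ->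
    (o <= (val h : O^d))%O.
  move=> h t o Ht; rewrite leEdual; apply: (V4 h t); apply: Gu_impl Ht => x.
  by rewrite leEdual.
pose sa := strat c0 d pa val ta.
pose sb := strat c0 d (O2 := O^d) pb val tb.
pose sigma h := match d h with pa => sa h | pb => sb h end.
exists sigma => -[g [X [s Hpref]]].
have Ha : (val g <= v (play g sigma))%O.
  apply: (@opt C c0 d _ O v pa val ta Hwa Hmaxa); first exact: play_pre.
  by move=> n Hn Hd; rewrite play_step // /sigma Hd.
have Hb : (v (play g sigma) <= val g)%O.
  rewrite -leEdual; apply: (@opt C c0 d _ (O^d) v pb val tb Hwb Hmaxb); first exact: play_pre.
  by move=> n Hn Hd; rewrite play_step // /sigma Hd.
case: X s Hpref => s Hpref /=.
- have Hb' : (v (play g (deviate sigma s)) <= val g)%O.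
    rewrite -leEdual; apply: (@opt C c0 d _ (O^d) v pb val tb Hwb Hmaxb); first exact: play_pre.
    move=> n Hn Hd; rewrite play_step // /deviate.
    case: player_eq_dec => [e|_]; first by exfalso; move: e; rewrite Hd.
    by rewrite /sigma Hd.
  move: (le_lt_trans Ha (lt_le_trans Hpref Hb')); by rewrite ltxx.
- have Ha' : (val g <= v (play g (deviate sigma s)))%O.
    apply: (@opt C c0 d _ O v pa val ta Hwa Hmaxa); first exact: play_pre.
    move=> n Hn Hd; rewrite play_step // /deviate.
    case: player_eq_dec => [e|_]; first by exfalso; move: e; rewrite Hd.
    by rewrite /sigma Hd.
  move: (le_lt_trans Ha' (lt_le_trans Hpref Hb)); by rewrite ltxx.
Qed.
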